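(* Let $n\ge 2$, $T\ge\log n$, $\nu\le 1$, and $\eta=\sqrt{\log(n)/T}$. Consider the following process (Hedge with noisy losses). Set $w^{(1)}_i=1$ for all $i\in[n]$. For $t=1,\dots,T$: output the distribution $p^{(t)}$ on $[n]$ with $p^{(t)}_i=w^{(t)}_i/\sum_j w^{(t)}_j$; then a random loss vector $\hat m^{(t)}\in\mathbb R^n$ is revealed; set $w^{(t+1)}_i=w^{(t)}_i\exp(-\eta\hat m^{(t)}_i)$. Let $m^{(t)}=\mathbb E[\hat m^{(t)}\mid \hat m^{(1)},\dots,\hat m^{(t-1)}]$, and suppose that for every $t$: $m^{(t)}\in[-1,1]^n$, and conditioned on $\hat m^{(1)},\dots,\hat m^{(t-1)}$, each coordinate of $\hat m^{(t)}-m^{(t)}$ is sub-Gaussian with variance proxy $\nu^2$ (i.e. $\mathbb E[\exp(s(\hat m^{(t)}_i-m^{(t)}_i))\mid\text{past}]\le\exp(s^2\nu^2/2)$ for all real $s$). Then for every $i\in[n]$, $$\mathbb E\Big[\sum_{t=1}^T\langle m^{(t)},p^{(t)}\rangle\Big]\le \mathbb E\Big[\sum_{t=1}^T m^{(t)}_i\Big]+4\sqrt{T\log n}.$$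
   Context: $\log$ is the natural logarithm and $[n]=\{1,\dots,n\}$. *)

(* Defs.v *)
From HB Require Import structures.
From mathcomp Require Import all_boot all_order all_algebra.
From mathcomp Require Import all_classical all_reals all_analysis.
Set Implicit Arguments. Unset Strict Implicit. Unset Printing Implicit Defensive.
Import Order.TTheory GRing.Theory Num.Theory.
Local Open Scope classical_set_scope.
Local Open Scope ring_scope.

Section Hedge.
Context (R : realType) (T : Type) (n : nat).

(* Hedge weights: w^(1)_i = 1 (index 0 here), w^(t+1)_i = w^(t)_i exp(-eta mhat^(t)_i).
   Time is 0-indexed: round t in {0,..,T-1} corresponds to round t+1 of the paper. *)
Fixpoint hedge_w (eta : R) (mhat : nat -> 'I_n -> T -> R) (t : nat)
    (i : 'I_n) (x : T) : R :=
  match t with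
  | 0 => 1
  | t'.+1 => hedge_w eta mhat t' i x * expR (- (eta * mhat t' i x))
  end.

Definition hedge_p (eta : R) (mhat : nat -> 'I_n -> T -> R) (t : nat)
    (i : 'I_n) (x : T) : R :=
  hedge_w eta mhat t i x / \sum_(j < n) hedge_w eta mhat t j x.

End Hedge.

Definition past_sigma (R : realType) (d : measure_display) (T : measurableType d)
    (n : nat) (mhat : nat -> 'I_n -> T -> R) (t : nat) : set (set T) :=
  <<s [set A | exists (s : nat) (j : 'I_n) (B : set R),
           (s < t)%N /\ measurable B /\ A = mhat s j @^-1` B] >>.

(* Main.v *)
Require Import Defs.
From HB Require Import structures.
From mathcomp Require Import all_boot all_order all_algebra.
From mathcomp Require Import all_classical all_reals all_analysis.
From mathcomp Require Import finmap measurable_realfun ring lra.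
Import Order.TTheory GRing.Theory Num.Theory.
Local Open Scope classical_set_scope.
Local Open Scope ring_scope.

Section Key.
Context (R : realType) d (Om : measurableType d) (P : {measure set Om -> \bar R}).
Context (G : set (set Om)) (HG : G `<=` measurable).
Local Notation S := (g_sigma_algebraType G).

Lemma sigmaG_meas A : <<s G>> A -> measurable A.
Proof. by apply: smallest_sub => //; exact: sigma_algebra_measurable. Qed.

Lemma meas_SOm (h : Om -> R) : measurable_fun (setT : set S) h ->
  measurable_fun (setT : set Om) h.
Proof.
move=> mh _ B mB; rewrite setTI; apply: sigmaG_meas.
by have := mh measurableT B mB; rewrite setTI.
Qed.

Import HBNNSimple.

Lemma int_indicM (A : set Om) (f : Om -> R) : measurable A ->
  (\int[P]_x (\1_A x * f x)%:E = \int[P]_(x in A) (f x)%:E)%E.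
Proof.
move=> mA; rewrite [RHS]integral_mkcond; apply: eq_integral => x _.
rewrite /patch indicE; case: (x \in A) => /=; by rewrite ?mul1r ?mul0r.
Qed.

Lemma key_nnsfun (f : Om -> R) (k : R) (g : {nnsfun S >-> R}) :
  0 <= k -> (forall x, 0 <= f x) -> measurable_fun setT f ->
  (forall A, <<s G>> A -> (\int[P]_(x in A) (f x)%:E <= k%:E * P A)%E) ->
  (\int[P]_x (g x * f x)%:E <= k%:E * \int[P]_x (g x)%:E)%E.
Proof.
move=> k0 f0 mf H.
set s := fset_set (range g).
have mA r : <<s G>> ((g : S -> R) @^-1` [set r] : set Om).
  rewrite -[X in <<s G>> X]setTI.
  exact: (measurable_funP g).
have a0 (i : 'I_#|`s|) : 0 <= s`_i.
  have : s`_i \in s by apply: mem_nth; exact: (ltn_ord i).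
  rewrite in_fset_set//; move/set_mem => -[x _ <-]; exact: fun_ge0.
have E1 x : (g x * f x)%:E = (\sum_(i < #|`s|) (s`_i * (\1_(g @^-1` [set s`_i]) x * f x))%:E)%E.
  by rewrite (fimfunEord g) mulr_suml sumEFin; congr (_ %:E); apply: eq_bigr => i _; rewrite mulrA.
have E2 x : (g x)%:E = (\sum_(i < #|`s|) (s`_i * \1_(g @^-1` [set s`_i]) x)%:E)%E.
  by rewrite (fimfunEord g) sumEFin.
under eq_integral do rewrite E1.
under [X in (_ <= _ * X)%E]eq_integral do rewrite E2.
rewrite ge0_integral_sum//; last 2 first.
- move=> i; apply/measurable_EFinP; apply: measurable_funM => //.
  apply: measurable_funM => //; apply/measurable_indic.
  exact: sigmaG_meas.
- by move=> i x _; rewrite lee_fin mulr_ge0// mulr_ge0.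
rewrite ge0_integral_sum//; last 2 first.
- move=> i; apply/measurable_EFinP; apply: measurable_funM => //.
  apply/measurable_indic; exact: sigmaG_meas.
- by move=> i x _; rewrite lee_fin mulr_ge0.
rewrite ge0_sume_distrr; last by move=> i _; apply: integral_ge0 => x _; rewrite lee_fin mulr_ge0.
apply: lee_sum => i _.
under eq_integral do rewrite EFinM.
under [X in (_ <= _ * X)%E]eq_integral do rewrite EFinM.
rewrite ge0_integralZl_EFin//; last 2 first.
- by move=> x _; rewrite lee_fin mulr_ge0.
- apply/measurable_EFinP; apply: measurable_funM => //.
  apply/measurable_indic; exact: sigmaG_meas.
rewrite ge0_integralZl_EFin//; try (by move=> x _; rewrite lee_fin);
  try (by apply/measurable_EFinP; apply/measurable_indic; exact: sigmaG_meas).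
have mAi := sigmaG_meas _ (mA s`_i).
rewrite int_indicM// integral_indic//.
rewrite setIT muleCA; apply: lee_pmul => //.
- by rewrite lee_fin.
- by apply: integral_ge0 => x _; rewrite lee_fin.
exact: H.
Qed.

Lemma key_ineq (f h : Om -> R) (k : R) :
  0 <= k -> (forall x, 0 <= f x) -> measurable_fun setT f ->
  (forall A, <<s G>> A -> (\int[P]_(x in A) (f x)%:E <= k%:E * P A)%E) ->
  (forall x, 0 <= h x) -> measurable_fun (setT : set S) h ->
  (\int[P]_x (h x * f x)%:E <= k%:E * \int[P]_x (h x)%:E)%E.
Proof.
move=> k0 f0 mf H h0 mh.
have mhE : measurable_fun (setT : set S) (EFin \o h) by apply/measurable_EFinP.
have hE0 : forall x : S, setT x -> (0 <= (EFin \o h) x)%E by move=> x _; rewrite lee_fin.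
pose g := nnsfun_approx (measurableT : measurable (setT : set S)) mhE.
have cg x : EFin \o (g ^~ x) @ \oo --> (h x)%:E := cvg_nnsfun_approx (measurableT : measurable (setT : set S)) mhE hE0 I.
have ndg := nd_nnsfun_approx (measurableT : measurable (setT : set S)) mhE.
have mgn n : measurable_fun (setT : set Om) (g n) by apply: meas_SOm.
have gle n x : ((g n x)%:E <= (h x)%:E)%E.
  by rewrite /g nnsfun_approxE; apply: le_approx.
have -> : (\int[P]_x (h x * f x)%:E =
    \int[P]_x limn (fun n => (g n x * f x)%:E))%E.
  apply: eq_integral => x _; apply/esym/cvg_lim => //.
  rewrite EFinM; under eq_fun do rewrite EFinM.
  by apply: cvgeZr => //; exact: cg.
rewrite monotone_convergence//; last 3 first.
- by move=> n; apply/measurable_EFinP; apply: measurable_funM.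
- by move=> n x _; rewrite lee_fin mulr_ge0.
- move=> x _ a b ab; rewrite lee_fin ler_wpM2r//.
  by have := ndg a b ab => /lefP; apply.
apply: lime_le.
  apply: ereal_nondecreasing_is_cvgn => a b ab; apply: ge0_le_integral => //.
  - by move=> x _; rewrite lee_fin mulr_ge0.
  - by apply/measurable_EFinP; apply: measurable_funM.
  - by apply/measurable_EFinP; apply: measurable_funM.
  - move=> x _; rewrite lee_fin ler_wpM2r//.
    by have := ndg a b ab => /lefP; apply.
apply: nearW => n.
apply: (le_trans (key_nnsfun f k (g n) k0 f0 mf H)).
apply: lee_wpmul2l; first by rewrite lee_fin.
apply: ge0_le_integral => //.
- by move=> x _; rewrite lee_fin.
- by apply/measurable_EFinP.
- by apply/measurable_EFinP; apply: meas_SOm.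
Qed.
End Key.

Section Pointwise.
Context (R : realType).

Lemma exp_quad (y : R) : -(1/2) <= y <= 1/2 -> expR y <= 1 + y + 2 * y ^+ 2.
Proof.
move=> /andP[y1 y2].
have h1 : 1 - y <= expR (- y) by have := expR_ge1Dx (- y).
have hy : 0 < 1 - y by lra.
have -> : expR y = (expR (- y))^-1 by rewrite expRN invrK.
apply: (le_trans (y := (1 - y)^-1)).
  by rewrite lef_pV2 ?posrE ?expR_gt0.
rewrite -(@ler_pM2l _ (1 - y)) // mulfV ?gt_eqF//.
have : 0 <= y ^+ 2 * (1 - 2 * y) by apply: mulr_ge0; [exact: sqr_ge0 | lra].
nra.
Qed.

Lemma hedge_step n (w mm : 'I_n -> R) (eta : R) :
  0 < eta -> eta <= 1/2 -> (forall j, 0 < w j) -> (forall j, -1 <= mm j <= 1) ->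
  0 < \sum_j w j ->
  \sum_j w j * expR (- (eta * mm j)) <=
  (\sum_j w j) * expR (- (eta * \sum_j mm j * (w j / \sum_k w k)) + 2 * eta ^+ 2).
Proof.
move=> e0 e1 w0 mb W0.
set W := \sum_k w k.
have h1 : \sum_j w j * expR (- (eta * mm j)) <=
    \sum_j w j * (1 - eta * mm j + 2 * eta ^+ 2).
  apply: ler_sum => j _; apply: ler_wpM2l; first exact: ltW.
  have /andP[a b] := mb j.
  have hq : expR (- (eta * mm j)) <= 1 + - (eta * mm j) + 2 * (- (eta * mm j))^+2.
    by apply: exp_quad; apply/andP; split; nra.
  have hm : mm j ^+ 2 <= 1 by nra.
  have he : 0 <= eta ^+ 2 by exact: sqr_ge0.
  have : eta ^+ 2 * mm j ^+ 2 <= eta ^+ 2 by nra.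
  move: hq; rewrite sqrrN exprMn; lra.
apply: (le_trans h1).
have WS : W * (\sum_j mm j * (w j / W)) = \sum_j (w j * mm j).
  rewrite mulr_sumr; apply: eq_bigr => j _; field; exact: lt0r_neq0.
have -> : \sum_j w j * (1 - eta * mm j + 2 * eta ^+ 2) =
    W + (- eta) * \sum_j (w j * mm j) + (2 * eta ^+ 2) * W.
  rewrite /W !mulr_sumr -!big_split /=; apply: eq_bigr => j _; ring.
set z := - (eta * \sum_j mm j * (w j / W)) + 2 * eta ^+ 2.
have := ler_wpM2l (ltW W0) (expR_ge1Dx z).
have -> : W * (1 + z) = W + (- eta) * \sum_j (w j * mm j) + (2 * eta ^+ 2) * W.
  by rewrite /z -WS; ring.
by [].
Qed.
End Pointwise.

Section GenInt.
Context (R : realType) d (Om : measurableType d) (P : probability Om R).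

Lemma intE (f : Om -> R) : P.-integrable setT (EFin \o f) ->
  (\int[P]_x (f x)%:E = (Rintegral P setT f)%:E)%E.
Proof. by move=> intf; rewrite /Rintegral fineK // integrable_fin_num. Qed.

Lemma int_bdd (f : Om -> R) (B : R) : measurable_fun setT f ->
  (forall x, `|f x| <= B) -> P.-integrable setT (EFin \o f).
Proof.
move=> mf fB; apply: measurable_bounded_integrable => //.
  by apply: (le_lt_trans (probability_le1 P measurableT)); rewrite ltry.
exists B; split; first by rewrite num_real.
move=> M BM x _; apply: le_trans (fB x) _; exact: ltW.
Qed.

Lemma int_lin (f g : Om -> R) (a b c : R) :
  P.-integrable setT (EFin \o f) -> P.-integrable setT (EFin \o g) ->
  P.-integrable setT (EFin \o (fun x => a * f x + b * g x + c)).
Proof.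
move=> intf intg.
apply: (eq_integrable measurableT (fun x => (a%:E * (f x)%:E + b%:E * (g x)%:E) + (cst c x)%:E)%E).
  by move=> x _ /=; rewrite -!EFinM -!EFinD.
apply: integrableD => //; last exact: finite_measure_integrable_cst.
by apply: integrableD => //; apply: integrableZl.
Qed.

Lemma Rint_lin (f g : Om -> R) (a b c : R) :
  P.-integrable setT (EFin \o f) -> P.-integrable setT (EFin \o g) ->
  Rintegral P setT (fun x => a * f x + b * g x + c) =
  a * Rintegral P setT f + b * Rintegral P setT g + c.
Proof.
move=> intf intg.
have i1 : P.-integrable setT (EFin \o (fun x => a * f x)).
  by apply: (eq_integrable measurableT (fun x => (a%:E * (f x)%:E)%E));
    [move=> x _ /=; rewrite -EFinM | exact: integrableZl].
have i2 : P.-integrable setT (EFin \o (fun x => b * g x)).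
  by apply: (eq_integrable measurableT (fun x => (b%:E * (g x)%:E)%E));
    [move=> x _ /=; rewrite -EFinM | exact: integrableZl].
have i12 : P.-integrable setT (EFin \o (fun x => a * f x + b * g x)).
  by have := int_lin f g a b 0 intf intg; apply: eq_integrable => // x _ /=; rewrite addr0.
rewrite RintegralD //; last exact: finite_measure_integrable_cst.
rewrite RintegralD // !RintegralZl // Rintegral_cst //.
rewrite (_ : fine _ = 1) ?mulr1 //.
exact: (f_equal fine (probability_setT P)).
Qed.
End GenInt.

Section Main.
Context (R : realType) d (Om : measurableType d) (P : probability Om R)
  (n T : nat) (nu : R) (mhat m : nat -> 'I_n -> Om -> R).
Hypothesis n2 : (2 <= n)%N.
Hypothesis Hmh : forall t i, measurable_fun setT (mhat t i).
Hypothesis Hpm : forall t i, (t < T)%N -> forall B : set R, measurable B ->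
      past_sigma mhat t (m t i @^-1` B).
Hypothesis Hbd : forall t i x, (t < T)%N -> -1 <= m t i x <= 1.
Variable eta : R.
Hypothesis e0 : 0 < eta.

Definition Gen t : set (set Om) := [set A | exists (s : nat) (j : 'I_n) (B : set R),
           (s < t)%N /\ measurable B /\ A = mhat s j @^-1` B].

Lemma pastE t : past_sigma mhat t = <<s Gen t>>. Proof. by []. Qed.

Local Notation w := (hedge_w eta mhat).
Local Notation p := (hedge_p eta mhat).
Definition Wt t x := \sum_(j < n) w t j x.
Definition Mt t x := \sum_(j < n) m t j x * p t j x.
Definition Lt t x := \sum_(s < t) Mt s x.

Lemma n0 : (0 < n)%N. Proof. by apply: leq_trans n2. Qed.

Lemma w_gt0 t j x : 0 < w t j x.
Proof. by elim: t => [|t IH] /=; [exact: ltr01 | rewrite mulr_gt0// expR_gt0]. Qed.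

Lemma W_gt0 t x : 0 < Wt t x.
Proof.
apply: (lt_le_trans (w_gt0 t (Ordinal n0) x)).
rewrite /Wt (bigD1 (Ordinal n0)) //= lerDl.
by apply: sumr_ge0 => j _; exact: ltW (w_gt0 _ _ _).
Qed.

Lemma p_ge0 t j x : 0 <= p t j x.
Proof. by apply: divr_ge0; [exact: ltW (w_gt0 _ _ _) | exact: ltW (W_gt0 t x)]. Qed.

Lemma p_sum t x : \sum_(j < n) p t j x = 1.
Proof.
rewrite /hedge_p -mulr_suml mulfV //; exact: lt0r_neq0 (W_gt0 t x).
Qed.

Lemma M_bd t x : (t < T)%N -> -1 <= Mt t x <= 1.
Proof.
move=> tT; apply/andP; split.
- rewrite -(p_sum t x) -sumrN; apply: ler_sum => j _.
  have /andP[a _] := Hbd t j x tT; have := p_ge0 t j x; nra.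
- rewrite -(p_sum t x); apply: ler_sum => j _.
  have /andP[_ b] := Hbd t j x tT; have := p_ge0 t j x; nra.
Qed.

Lemma w_closed t j x : w t j x = expR (- (eta * \sum_(s < t) mhat s j x)).
Proof.
elim: t => [|t IH] /=; first by rewrite big_ord0 mulr0 oppr0 expR0.
by rewrite IH big_ord_recr /= -expRD; congr expR; ring.
Qed.

Lemma Gen_meas t : Gen t `<=` measurable.
Proof.
move=> A [s [j [B [_ [mB ->]]]]]; rewrite -[X in measurable X]setTI.
exact: Hmh.
Qed.

Lemma sig_mono {s t : nat} : (s <= t)%N -> <<s Gen s>> `<=` <<s Gen t>>.
Proof.
move=> st; apply: sub_smallest2r; first exact: smallest_sigma_algebra.
move=> A [s' [j [B [h1 [h2 h3]]]]].
by exists s', j, B; split => //; exact: leq_trans h1 st.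
Qed.

Local Notation mS t f := (measurable_fun (setT : set (g_sigma_algebraType (Gen t))) f).

Lemma mhat_S s t j : (s < t)%N -> mS t (mhat s j).
Proof. by move=> st _ B mB; rewrite setTI; apply: sub_gen_smallest; exists s, j, B. Qed.

Lemma m_S s t j : (s <= t)%N -> (s < T)%N -> mS t (m s j).
Proof. by move=> st sT _ B mB; rewrite setTI; exact: (sig_mono st _ (Hpm s j sT B mB)). Qed.

Lemma w_S s t j : (s <= t)%N -> mS t (w s j).
Proof.
elim: s => [|s IH] st; first exact: measurable_cst.
have -> : w s.+1 j = (fun x => w s j x * expR (- (eta * mhat s j x))) by [].
apply: measurable_funM; first by apply: IH; exact: ltnW.
apply: measurableT_comp; first exact: measurable_expR.
apply: measurable_funN; apply: measurable_funM; first exact: measurable_cst.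
exact: mhat_S.
Qed.

Lemma W_S s t : (s <= t)%N -> mS t (Wt s).
Proof. by move=> st; apply: measurable_sum => j; exact: w_S. Qed.

Lemma p_S s t j : (s <= t)%N -> mS t (p s j).
Proof.
move=> st.
have -> : p s j = (fun x => w s j x * expR (- ln (Wt s x))).
  apply/funext => x; rewrite /hedge_p expRN lnK //; rewrite posrE; exact: W_gt0.
apply: measurable_funM; first exact: w_S.
apply: measurableT_comp; first exact: measurable_expR.
apply: measurable_funN; apply: measurableT_comp; first exact: measurable_ln.
exact: W_S.
Qed.

Lemma M_S s t : (s <= t)%N -> (s < T)%N -> mS t (Mt s).
Proof.
move=> st sT; apply: measurable_sum => j; apply: measurable_funM.
  exact: m_S. exact: p_S.
Qed.

Lemma L_S s t : (s <= t.+1)%N -> (s <= T)%N -> mS t (Lt s).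
Proof.
move=> st sT; apply: measurable_sum => r; apply: M_S.
  by rewrite -ltnS; exact: leq_trans (ltn_ord r) st.
exact: leq_trans (ltn_ord r) sT.
Qed.

Lemma mOm t (f : Om -> R) : mS t f -> measurable_fun (setT : set Om) f.
Proof. exact: meas_SOm (@Gen_meas t) f. Qed.


Hypothesis Hsg : forall t i, (t < T)%N -> forall s : R, forall A, past_sigma mhat t A ->
      (\int[P]_(x in A) (expR (s * (mhat t i x - m t i x)))%:E
         <= (expR (s ^+ 2 * nu ^+ 2 / 2))%:E * P A)%E.
Hypothesis e1 : eta <= 1/2.

Definition cc := 2 * eta ^+ 2 + eta ^+ 2 * nu ^+ 2 / 2.
Definition Z t x := Wt t x * expR (eta * Lt t x - t%:R * cc).

Lemma Z_S t : (t <= T)%N -> mS t (Z t).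
Proof.
move=> tT; apply: measurable_funM; first exact: W_S.
apply: measurableT_comp; first exact: measurable_expR.
apply: measurable_funB; last exact: measurable_cst.
apply: measurable_funM; first exact: measurable_cst.
exact: L_S.
Qed.

Lemma Z_ge0 t x : 0 <= Z t x.
Proof. by rewrite /Z mulr_ge0 // ?expR_ge0 // ltW // W_gt0. Qed.

Lemma Z_step t : (t < T)%N -> (\int[P]_x (Z t.+1 x)%:E <= \int[P]_x (Z t x)%:E)%E.
Proof.
move=> tT.
pose F x := expR (eta * Lt t.+1 x - t.+1%:R * cc).
have mF : mS t F.
  apply: measurableT_comp; first exact: measurable_expR.
  apply: measurable_funB; last exact: measurable_cst.
  apply: measurable_funM; first exact: measurable_cst.
  by apply: L_S.
pose k := expR ((- eta) ^+ 2 * nu ^+ 2 / 2).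
pose h j x := w t j x * F x * expR (- (eta * m t j x)).
pose f j x := expR ((- eta) * (mhat t j x - m t j x)).
have EZ x : Z t.+1 x = \sum_(j < n) h j x * f j x.
  rewrite /Z /Wt mulr_suml; apply: eq_bigr => j _.
  rewrite /h /f /F /= -!mulrA; congr (_ * _).
  rewrite mulrC -!expRD; congr expR; ring.
have hS j : mS t (h j).
  apply: measurable_funM; first apply: measurable_funM => //; first exact: w_S.
  apply: measurableT_comp; first exact: measurable_expR.
  apply: measurable_funN; apply: measurable_funM; first exact: measurable_cst.
  exact: m_S.
have fO j : measurable_fun setT (f j).
  apply: measurableT_comp; first exact: measurable_expR.
  apply: measurable_funM; first exact: measurable_cst.
  apply: measurable_funB; first exact: Hmh.
  by apply: (mOm t); exact: m_S.
have h0 j x : 0 <= h j x by rewrite /h !mulr_ge0 // ?expR_ge0 // ltW // w_gt0.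
have f0 j x : 0 <= f j x by rewrite expR_ge0.
under eq_integral do rewrite EZ -sumEFin.
rewrite ge0_integral_sum //; last 2 first.
- move=> j; apply/measurable_EFinP; apply: measurable_funM => //.
  exact: (mOm _ _ (hS j)).
- by move=> j x _; rewrite lee_fin mulr_ge0.
apply: (le_trans (y := (\sum_(j < n) k%:E * \int[P]_x (h j x)%:E)%E)).
  apply: lee_sum => j _.
  apply: (key_ineq _ _ _ _ _ (@Gen_meas t)) => //.
  - exact: expR_ge0.
  - by move=> A HA; apply: Hsg.
rewrite -ge0_sume_distrr; last by move=> j _; apply: integral_ge0 => x _; rewrite lee_fin.
rewrite -ge0_integral_sum //; last 2 first.
- by move=> j; apply/measurable_EFinP; exact: (mOm _ _ (hS j)).
- by move=> j x _; rewrite lee_fin.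
have -> : (k%:E * \int[P]_x (\sum_(j < n) (h j x)%:E) =
    \int[P]_x (k%:E * \sum_(j < n) (h j x)%:E))%E.
  rewrite ge0_integralZl_EFin //.
  - by move=> x _; apply: sume_ge0 => j _; rewrite lee_fin.
  - apply: emeasurable_sum => j; apply/measurable_EFinP; exact: (mOm _ _ (hS j)).
  - exact: expR_ge0.
apply: ge0_le_integral => //.
- move=> x _; rewrite sumEFin -EFinM lee_fin mulr_ge0 ?expR_ge0 //.
  by apply: sumr_ge0.
- rewrite (_ : (fun x => _) = (fun x => (k * \sum_(j < n) h j x)%:E)); last first.
    by apply/funext => x; rewrite sumEFin -EFinM.
  apply/measurable_EFinP; apply: measurable_funM; first exact: measurable_cst.
  by apply: measurable_sum => j; exact: (mOm _ _ (hS j)).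
- apply/measurable_EFinP; apply: (mOm t); apply: Z_S; exact: ltnW.
move=> x _; rewrite sumEFin -EFinM lee_fin.
have Hs := @hedge_step R n (fun j => w t j x) (fun j => m t j x) eta e0 e1
  (fun j => w_gt0 t j x) (fun j => Hbd t j x tT) (W_gt0 t x).
have -> : \sum_(j < n) h j x = F x * \sum_(j < n) w t j x * expR (- (eta * m t j x)).
  rewrite mulr_sumr; apply: eq_bigr => j _; rewrite /h; ring.
rewrite mulrA.
apply: (le_trans (ler_wpM2l _ Hs)).
  by rewrite mulr_ge0 // expR_ge0.
have -> : \sum_j m t j x * (w t j x / \sum_k w t k x) = Mt t x by [].
have LS : Lt t.+1 x = Lt t x + Mt t x by rewrite /Lt big_ord_recr.
have -> : \sum_j w t j x = Wt t x by [].
rewrite /Z [X in X <= _](_ : _ = Wt t x * (k * F x *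
  expR (- (eta * Mt t x) + 2 * eta ^+ 2))); last by ring.
suff -> : k * F x * expR (- (eta * Mt t x) + 2 * eta ^+ 2) =
  expR (eta * Lt t x - t%:R * cc) by [].
rewrite /k /F -!expRD LS /cc -natr1; congr expR; ring.
Qed.

Lemma Z0 x : Z 0 x = n%:R.
Proof.
rewrite /Z /Lt big_ord0 mulr0 mul0r subr0 expR0 mulr1 /Wt.
by rewrite (eq_bigr (fun=> 1)) // sumr_const card_ord.
Qed.

Lemma Zint_le t : (t <= T)%N -> (\int[P]_x (Z t x)%:E <= n%:R%:E)%E.
Proof.
elim: t => [|t IH] tT.
  under eq_integral do rewrite Z0.
  by rewrite integral_cst //= probability_setT mule1.
exact: le_trans (Z_step _ tT) (IH (ltnW tT)).
Qed.

Lemma final_pt i x :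
  eta * Lt T x - eta * (\sum_(t < T) mhat t i x) - (T%:R * cc + ln n%:R) + 1
  <= Z T x / n%:R.
Proof.
have nR : 0 < (n%:R : R) by rewrite ltr0n n0.
have h1 : w T i x * expR (eta * Lt T x - T%:R * cc) <= Z T x.
  rewrite /Z ler_wpM2r ?expR_ge0 // /Wt (bigD1 i) //= lerDl.
  by apply: sumr_ge0 => j _; exact: ltW (w_gt0 _ _ _).
rewrite w_closed -expRD in h1.
set e := (- (eta * \sum_(s < T) mhat s i x) + (eta * Lt T x - T%:R * cc)) in h1.
have h2 : expR (e - ln n%:R) <= Z T x / n%:R.
  by rewrite expRD expRN lnK ?posrE // ler_pM2r ?invr_gt0.
apply: le_trans h2.
have := expR_ge1Dx (e - ln n%:R); rewrite /e; lra.
Qed.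

Hypothesis Hint : forall t i, (t < T)%N -> P.-integrable setT (EFin \o mhat t i).
Hypothesis Hce : forall t i, (t < T)%N -> forall A, past_sigma mhat t A ->
      (\int[P]_(x in A) (mhat t i x)%:E = \int[P]_(x in A) (m t i x)%:E)%E.

Lemma Sm_int i : P.-integrable setT (EFin \o (fun x => \sum_(t < T) m t i x)).
Proof.
apply: (@int_bdd _ _ _ _ _ T%:R).
  apply: measurable_sum => t; apply: (mOm t); apply: m_S => //; exact: ltn_ord.
move=> x; apply: (le_trans (ler_norm_sum _ _ _)).
rewrite -[X in _ <= X%:R](card_ord T) -sumr_const; apply: ler_sum => t _.
by rewrite ler_norml; exact: Hbd.
Qed.

Lemma L_int : P.-integrable setT (EFin \o Lt T).
Proof.
apply: (@int_bdd _ _ _ _ _ T%:R).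
  by apply: (mOm T); apply: L_S.
move=> x; apply: (le_trans (ler_norm_sum _ _ _)).
rewrite -[X in _ <= X%:R](card_ord T) -sumr_const; apply: ler_sum => t _.
by rewrite ler_norml; exact: M_bd.
Qed.

Lemma Sh_int i : P.-integrable setT (EFin \o (fun x => \sum_(t < T) mhat t i x)).
Proof.
apply: (eq_integrable measurableT (fun x => \sum_(t < T) (mhat t i x)%:E)%E).
  by move=> x _ /=; rewrite sumEFin.
by apply: (integrable_sum measurableT) => t _; exact: Hint.
Qed.

Lemma Z_int : P.-integrable setT (EFin \o Z T).
Proof.
apply/integrableP; split.
  by apply/measurable_EFinP; apply: (mOm T); exact: Z_S.
under eq_integral do rewrite /= ger0_norm ?Z_ge0 //.
by apply: le_lt_trans (Zint_le _ (leqnn T)) _; rewrite ltry.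
Qed.

Lemma Sh_Sm i : Rintegral P setT (fun x => \sum_(t < T) mhat t i x) =
  Rintegral P setT (fun x => \sum_(t < T) m t i x).
Proof.
rewrite /Rintegral; congr fine.
under eq_integral do rewrite -sumEFin.
under [RHS]eq_integral do rewrite -sumEFin.
rewrite integral_sum //; last by move=> t; exact: Hint.
rewrite integral_sum //; last first.
  move=> t; apply: (@int_bdd _ _ _ _ _ 1).
    by apply: (mOm t); apply: m_S.
  by move=> x; rewrite ler_norml; exact: Hbd.
apply: eq_bigr => t _; apply: Hce => //.
exact: (@measurableT _ (g_sigma_algebraType (Gen t))).
Qed.

Lemma main_bound i :
  (\int[P]_x (Lt T x)%:E <= \int[P]_x (\sum_(t < T) m t i x)%:E
     + ((T%:R * cc + ln n%:R) / eta)%:E)%E.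
Proof.
set K := T%:R * cc + ln n%:R.
rewrite (@intE _ _ _ P _ L_int) (@intE _ _ _ P _ (Sm_int i)) -EFinD lee_fin.
have nR : 0 < (n%:R : R) by rewrite ltr0n n0.
have H1 := @le_Rintegral _ _ _ P setT
  (fun x => eta * Lt T x + (- eta) * (\sum_(t < T) mhat t i x) + (1 - K))
  (fun x => (n%:R)^-1 * Z T x + 0 * Z T x + 0) measurableT
  (@int_lin _ _ _ P _ _ _ _ _ L_int (Sh_int i)) (@int_lin _ _ _ P _ _ _ _ _ Z_int Z_int).
rewrite (@Rint_lin _ _ _ P _ _ _ _ _ Z_int Z_int) (@Rint_lin _ _ _ P _ _ _ _ _ L_int (Sh_int i)) in H1.
have H2 : Rintegral P setT (Z T) <= n%:R.
  by rewrite -lee_fin -(@intE _ _ _ P _ Z_int) Zint_le.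
have H3 : (n%:R)^-1 * Rintegral P setT (Z T) <= 1.
  by rewrite ler_pdivrMl // mulr1.
have pt : forall x, setT x -> eta * Lt T x + (- eta) * (\sum_(t < T) mhat t i x) + (1 - K)
    <= (n%:R)^-1 * Z T x + 0 * Z T x + 0.
  move=> x _; rewrite mul0r !addr0 [_^-1 * _]mulrC.
  have := final_pt i x; rewrite /K; lra.
have H4 := H1 pt.
rewrite Sh_Sm in H4.
have Kq : K = K / eta * eta by rewrite divfK // gt_eqF.
move: H4; rewrite Kq; set q := K / eta; move: H3; set RZ := Rintegral _ _ (Z T).
move=> h3 h4; rewrite mulfK ?gt_eqF //.
set LL := Rintegral _ _ (Lt T); set SS := Rintegral _ _ (fun x => \sum_(t < T) m t i x).
have : eta * (LL - SS - q) <= 0 by move: h4; rewrite /LL /SS; lra.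
rewrite pmulr_rle0 //; lra.
Qed.

Lemma triv_bound i :
  (\int[P]_x (Lt T x)%:E <= \int[P]_x (\sum_(t < T) m t i x)%:E
     + (2 * T%:R)%:E)%E.
Proof.
rewrite (@intE _ _ _ P _ L_int) (@intE _ _ _ P _ (Sm_int i)) -EFinD lee_fin.
have H1 := @le_Rintegral _ _ _ P setT (Lt T)
  (fun x => 1 * (\sum_(t < T) m t i x) + 0 * (\sum_(t < T) m t i x) + 2 * T%:R) measurableT
  L_int (@int_lin _ _ _ P _ _ _ _ _ (Sm_int i) (Sm_int i)).
rewrite (@Rint_lin _ _ _ P _ _ _ _ _ (Sm_int i) (Sm_int i)) in H1.
have pt : forall x, setT x -> Lt T x <= 1 * (\sum_(t < T) m t i x) + 0 * (\sum_(t < T) m t i x) + 2 * T%:R.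
  move=> x _; rewrite mul1r mul0r addr0.
  have a : Lt T x <= T%:R.
    rewrite /Lt -[X in _ <= X%:R](card_ord T) -sumr_const; apply: ler_sum => t _.
    by have /andP[_ ->] := M_bd t x (ltn_ord t).
  have b : - T%:R <= \sum_(t < T) m t i x.
    rewrite -[X in - X%:R <= _](card_ord T) -sumr_const -sumrN; apply: ler_sum => t _.
    by have /andP[-> _] := Hbd t i x (ltn_ord t).
  lra.
have := H1 pt; lra.
Qed.
End Main.

Theorem mainTheorem3 (R : realType) (d : measure_display) (Omega : measurableType d)
    (P : probability Omega R) (n T : nat) (nu : R)
    (mhat m : nat -> 'I_n -> Omega -> R) :
  (2 <= n)%N ->
  ln (n%:R : R) <= T%:R ->
  0 <= nu -> nu <= 1 ->
  (forall t i, measurable_fun setT (mhat t i)) ->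
  (forall t i, (t < T)%N -> P.-integrable setT (EFin \o mhat t i)) ->
  (forall t i, (t < T)%N -> forall B : set R, measurable B ->
      past_sigma mhat t (m t i @^-1` B)) ->
  (forall t i, (t < T)%N -> forall A, past_sigma mhat t A ->
      (\int[P]_(x in A) (mhat t i x)%:E = \int[P]_(x in A) (m t i x)%:E)%E) ->
  (forall t i x, (t < T)%N -> -1 <= m t i x <= 1) ->
  (forall t i, (t < T)%N -> forall s : R, forall A, past_sigma mhat t A ->
      (\int[P]_(x in A) (expR (s * (mhat t i x - m t i x)))%:E
         <= (expR (s ^+ 2 * nu ^+ 2 / 2))%:E * P A)%E) ->
  forall i : 'I_n,
    let eta := Num.sqrt (ln n%:R / T%:R) in
    (\int[P]_x (\sum_(t < T) \sum_(j < n) m t j x * hedge_p eta mhat t j x)%:E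
      <= \int[P]_x (\sum_(t < T) m t i x)%:E
         + (4 * Num.sqrt (T%:R * ln n%:R))%:E)%E.
Proof.
move=> n2 hl nu0 nu1 Hmh Hint Hpm Hce Hbd Hsg i; cbv zeta.
set eta := Num.sqrt (ln n%:R / T%:R).
set l := ln (n%:R : R).
have l0 : 0 < l by apply: ln_gt0; rewrite ltr1n.
have T0 : 0 < (T%:R : R) by apply: lt_le_trans hl.
set q := Num.sqrt (T%:R * l).
have q0 : 0 <= q by apply: sqrtr_ge0.
have eta0 : 0 <= eta by apply: sqrtr_ge0.
have eta2 : eta ^+ 2 = l / T%:R by rewrite sqr_sqrtr // divr_ge0 // ltW.
have q2 : q ^+ 2 = T%:R * l by rewrite sqr_sqrtr // mulr_ge0 // ltW.
have etaq : eta * q = l.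
  rewrite /eta /q -sqrtrM ?divr_ge0 ?ltW //.
  rewrite (_ : l / T%:R * (T%:R * l) = l ^+ 2); last by field; exact: lt0r_neq0.
  by rewrite sqrtr_sqr ger0_norm // ltW.
have etaT : eta ^+ 2 * T%:R = l by rewrite eta2 divfK // gt_eqF.
have Sm_fin : (\int[P]_x (\sum_(t < T) m t i x)%:E)%E \is a fin_num.
  apply: integrable_fin_num => //.
  exact: (Sm_int _ _ _ P _ _ _ _ Hmh Hpm Hbd i).
have [e1|e1] := leP eta (1/2).
- have e0 : 0 < eta.
    rewrite lt0r eta0 andbT; apply/eqP => e00.
    by move: etaq; rewrite e00 mul0r => /esym/eqP; rewrite gt_eqF.
  have := main_bound _ _ _ P _ _ _ _ _ n2 Hmh Hpm Hbd _ e0 Hsg e1 Hint Hce i.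
  move/le_trans; apply.
  rewrite -(fineK Sm_fin) -!EFinD lee_fin lerD2l.
  rewrite ler_pdivrMr // /cc.
  have nu2 : nu ^+ 2 <= 1 by rewrite expr_le1.
  have : eta ^+ 2 * T%:R * nu ^+ 2 <= eta ^+ 2 * T%:R by apply: ler_piMr => //; rewrite mulr_ge0 ?sqr_ge0 // ltW.
  rewrite etaT => h.
  have E : T%:R * (2 * eta ^+ 2 + eta ^+ 2 * nu ^+ 2 / 2) = 2 * (eta ^+ 2 * T%:R) + (eta ^+ 2 * T%:R * nu ^+ 2) / 2.
    by ring.
  rewrite E etaT; change (ln (n%:R : R)) with l; rewrite -etaq; move: h; rewrite -etaq; lra.
- have := triv_bound _ _ _ P _ _ _ _ n2 Hmh Hpm Hbd eta i.
  move/le_trans; apply.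
  rewrite -(fineK Sm_fin) -!EFinD lee_fin lerD2l.
  have h1 : 1/4 < eta ^+ 2 by have := e1; nra.
  have h2 : T%:R < 4 * l.
    by move: h1; rewrite eta2 ltr_pdivlMr // => h; lra.
  have h3 : T%:R ^+ 2 < 4 * q ^+ 2 by rewrite q2; nra.
  nra.
Qed.
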